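(* Let $m\ge1$, $d=2m$, and work in $\mathcal{H}^{\mathrm B}$. Then: (a) $u_j^+$ commutes with $T_i$ for all $i\in\{0,1,\dots,d-1\}\setminus\{j\}$. (b) For $i\ge1$, $u_i^+T_{i\to0}=u_{i+1}^+T_{1\to i}^{-1}-q^iu_i^+T_{1\to i}^{-1}$. (c) Let $x\in\Sigma_{2m}$ and $i\ge1$. Then $u_i^+T_xT_0\in u_i^+\mathcal{H}+\sum_{j>i}\mathcal{H}u_j^+\mathcal{H}$. In particular, $u_i^+T_{i\to0}\in u_i^+(-q^iT_{1\to i}^{-1})+\sum_{j>i}\mathcal{H}u_j^+\mathcal{H}$.
   Context: $K$ is a commutative ring and $q\in K^\times$. $\mathcal{H}^{\mathrm B}=\mathcal{H}_{(1,q)}(W(\mathrm B_{2m}))$ is the associative $K$-algebra generated by $T_0,T_1,\dots,T_{2m-1}$ subject to the type $\mathrm B_{2m}$ braid relations ($T_0T_1T_0T_1=T_1T_0T_1T_0$, $T_0T_i=T_iT_0$ for $i\ge2$, $T_iT_{i+1}T_i=T_{i+1}T_iT_{i+1}$ and $T_iT_j=T_jT_i$ for $i,j\ge1$, $|i-j|\ge2$) and quadratic relations $T_0^2=1$, $T_i^2=(q-1)T_i+q$ for $i\ge1$. $\mathcal{H}=\mathcal{H}_q(\Sigma_{2m})$ is the subalgebra generated by $T_1,\dots,T_{2m-1}$, and $T_x=T_{i_1}\cdots T_{i_r}$ for a reduced expression $x=s_{i_1}\cdots s_{i_r}$. For $a,b\ge0$: $T_{a\to b}=T_aT_{a-1}\cdots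 T_b$ if $a>b$, $T_a$ if $a=b$, $T_aT_{a+1}\cdots T_b$ if $a<b$; $T_{a\to b\to a}=T_aT_{a-1}\cdots T_{b+1}T_bT_{b+1}\cdots T_a$ if $a>b$, $T_a$ if $a=b$, and $T_a\cdots T_{b-1}T_bT_{b-1}\cdots T_a$ if $a<b$. The Jucys–Murphy type elements are $u_k^{\pm}=\prod_{i=0}^{k-1}(q^i\pm T_{i\to0\to i})$ (the factors commute pairwise), with $u_0^\pm=1$. *)

(* Defs.v *)
From HB Require Import structures.
From mathcomp Require Import all_boot all_order all_algebra all_fingroup.
Set Implicit Arguments. Unset Strict Implicit. Unset Printing Implicit Defensive.
Import Order.TTheory GRing.Theory Num.Theory.
Local Open Scope ring_scope.

(* Generators are given as a function T : nat -> A; only T 0 .. T (d-1) matter. *)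

(* Defining relations of H_(1,q)(W(B_d)) (type B_d braid relations and quadratic
   relations T_0^2 = 1, T_i^2 = (q-1)T_i + q for i >= 1). *)
Definition HeckeB_rel (K : comPzRingType) (A : algType K) (d : nat) (q : K)
    (T : nat -> A) : Prop :=
  [/\ (1 < d)%N -> T 0%N * T 1%N * T 0%N * T 1%N = T 1%N * T 0%N * T 1%N * T 0%N,
      forall i, (2 <= i < d)%N -> T 0%N * T i = T i * T 0%N,
      forall i, (1 <= i)%N -> (i.+1 < d)%N ->
        T i * T i.+1 * T i = T i.+1 * T i * T i.+1,
      forall i j, (1 <= i < d)%N -> (1 <= j < d)%N -> ((i + 2 <= j) || (j + 2 <= i))%N ->
        T i * T j = T j * T i
    & (T 0%N * T 0%N = 1 /\ forall i, (1 <= i < d)%N -> T i * T i = (q - 1) *: T i + q%:A) ].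

Definition Tw (A : pzRingType) (T : nat -> A) (w : seq nat) : A := \prod_(k <- w) T k.

Definition word_to (a b : nat) : seq nat :=
  if (b <= a)%N then rev (iota b (a - b).+1) else iota a (b - a).+1.

Definition Tto (A : pzRingType) (T : nat -> A) (a b : nat) : A := Tw T (word_to a b).

Definition Tarc (A : pzRingType) (T : nat -> A) (a b : nat) : A :=
  if a == b then T a
  else if (b < a)%N then Tw T (word_to a b ++ word_to b.+1 a)
  else Tw T (word_to a b ++ word_to b.-1 a).

Definition uplus (K : comPzRingType) (A : algType K) (q : K) (T : nat -> A)
    (k : nat) : A :=
  \prod_(0 <= i < k) ((q ^+ i)%:A + Tarc T i 0).

(* membership in the subalgebra H generated by T_1, ..., T_{d-1}
   (K-linear combinations of products of these generators) *)
Definition inH (K : comPzRingType) (A : algType K) (d : nat) (T : nat -> A)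
    (a : A) : Prop :=
  exists s : seq (K * seq nat),
    (forall p, p \in s -> all (fun k => (1 <= k < d)%N) p.2) /\
    a = \sum_(p <- s) p.1 *: Tw T p.2.

Definition inSumHuH (K : comPzRingType) (A : algType K) (d : nat) (q : K)
    (T : nat -> A) (i : nat) (a : A) : Prop :=
  exists s : seq (nat * A * A),
    (forall e, e \in s -> [/\ (i < e.1.1 <= d)%N, inH d T e.1.2 & inH d T e.2]) /\
    a = \sum_(e <- s) e.1.2 * uplus q T e.1.1 * e.2.

(* Symmetric group Sigma_d acting on {0,..,d-1}; s_k (1 <= k <= d-1) swaps k-1 and k
   (i.e. k and k+1 in 1-based numbering). *)
Definition sfun (k p : nat) : nat :=
  if p == k.-1 then k else if p == k then k.-1 else p.

Fixpoint wfun (w : seq nat) (p : nat) : nat :=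
  if w is k :: w' then sfun k (wfun w' p) else p.

Definition ninv (d : nat) (x : 'S_d) : nat :=
  \sum_(a < d) \sum_(b < d) ((a < b) && (x b < x a))%N.

Definition reduced_expr (d : nat) (x : 'S_d) (w : seq nat) : Prop :=
  [/\ all (fun k => (1 <= k < d)%N) w,
      (forall p : 'I_d, val (x p) = wfun w (val p))
    & size w = ninv x].

(* Main.v *)
Require Import Defs.
From HB Require Import structures.
From mathcomp Require Import all_boot all_order all_algebra all_fingroup.
From mathcomp Require Import zify.
Import Order.TTheory GRing.Theory Num.Theory.
Set Implicit Arguments. Unset Strict Implicit. Unset Printing Implicit Defensive.
Local Open Scope ring_scope.

Section Hk.
Variables (K : comPzRingType) (A : algType K) (q : K) (T : nat -> A) (d : nat).
Hypothesis d1 : (1 < d)%N.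
Hypothesis HR : HeckeB_rel d q T.

Lemma hB : T 0%N * T 1%N * T 0%N * T 1%N = T 1%N * T 0%N * T 1%N * T 0%N.
Proof. by case: HR => h _ _ _ _; apply: h. Qed.
Lemma h0c i : (2 <= i < d)%N -> GRing.comm (T 0%N) (T i).
Proof. by case: HR => _ h _ _ _; apply: h. Qed.
Lemma hbr i : (1 <= i)%N -> (i.+1 < d)%N -> T i * T i.+1 * T i = T i.+1 * T i * T i.+1.
Proof. by case: HR => _ _ h _ _; apply: h. Qed.
Lemma hfar i j : (1 <= i < d)%N -> (1 <= j < d)%N -> ((i + 2 <= j) || (j + 2 <= i))%N ->
  GRing.comm (T i) (T j).
Proof. by case: HR => _ _ _ h _; apply: h. Qed.
Lemma h00 : T 0%N * T 0%N = 1.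
Proof. by case: HR => _ _ _ _ []. Qed.
Lemma hq i : (1 <= i < d)%N -> T i * T i = (q - 1) *: T i + q%:A.
Proof. by case: HR => _ _ _ _ [_ h]; apply: h. Qed.

Lemma Tw_cat w1 w2 : Tw T (w1 ++ w2) = Tw T w1 * Tw T w2.
Proof. by rewrite /Tw big_cat. Qed.
Lemma Tw_cons k w : Tw T (k :: w) = T k * Tw T w.
Proof. by rewrite /Tw big_cons. Qed.
Lemma Tw_nil : Tw T [::] = 1.
Proof. by rewrite /Tw big_nil. Qed.
Lemma Tw1 k : Tw T [:: k] = T k.
Proof. by rewrite Tw_cons Tw_nil mulr1. Qed.

Lemma comm_Tw x w : (forall l, l \in w -> GRing.comm x (T l)) -> GRing.comm x (Tw T w).
Proof. move=> h; rewrite /Tw big_seq; apply: commr_prod => l; exact: h. Qed.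

Fixpoint Lj (k : nat) : A := if k is k'.+1 then T k'.+1 * Lj k' * T k'.+1 else T 0%N.

Lemma DU_L k : Tw T (rev (iota 0 k.+1)) * Tw T (iota 1 k) = Lj k.
Proof.
have iS : forall m n, iota m n.+1 = iota m n ++ [:: m + n]%N.
  by move=> m n; rewrite -addn1 iotaD.
elim: k => [|k IH]; first by rewrite /= Tw_nil Tw1 mulr1.
have e1 : iota 0 k.+2 = iota 0 k.+1 ++ [:: k.+1] by rewrite iS add0n.
have e2 : iota 1 k.+1 = iota 1 k ++ [:: k.+1] by rewrite iS add1n.
by rewrite e1 e2 rev_cat Tw_cat Tw_cat /= Tw1 -IH !mulrA.
Qed.

Lemma Tarc_L k : Tarc T k 0 = Lj k.
Proof.
case: k => [|k]; first by rewrite /Tarc eqxx.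
rewrite -DU_L /Tarc /= Tw_cat.
have -> : word_to k.+1 0 = rev (iota 0 k.+2) by rewrite /word_to leq0n subn0.
have e : forall k, word_to 1 k.+1 = iota 1 k.+1.
  by case=> [|j] //; rewrite /word_to /= subn1.
by rewrite e.
Qed.

Notation comm := GRing.comm.

Lemma F1 k i : (k.+2 <= i)%N -> (i < d)%N -> comm (T i) (Lj k).
Proof.
elim: k i => [|k IH] i hi hd /=.
  by apply/commr_sym/h0c; lia.
apply: commrM; first apply: commrM.
- by apply: hfar; lia.
- by apply: IH; lia.
- by apply: hfar; lia.
Qed.

Lemma F0 k : (k < d)%N -> comm (T 0%N) (Lj k).
Proof.
case: k => [|k]; first by move=> _; apply: commr_refl.
elim: k => [|k IH] hk.
  by rewrite /= /comm !mulrA hB.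
rewrite [Lj _]/=; apply: commrM; first apply: commrM.
- by apply: h0c; lia.
- by apply: IH; lia.
- by apply: h0c; lia.
Qed.

Lemma F2 i k : (1 <= i)%N -> (i < k)%N -> (k < d)%N -> comm (T i) (Lj k).
Proof.
move=> i1; elim: k => [|k IH] // ik kd.
case: (ltngtP i k) => [lt|gt|eq].
- rewrite [Lj _]/=; apply: commrM; first apply: commrM.
  + by apply: hfar; lia.
  + by apply: IH; lia.
  + by apply: hfar; lia.
- lia.
- subst k; case: i i1 ik kd IH => [|i] // _ _ kd _.
  have c : comm (T i.+2) (Lj i) by apply: F1; lia.
  have b : T i.+1 * T i.+2 * T i.+1 = T i.+2 * T i.+1 * T i.+2 by apply: hbr; lia.
  rewrite /comm [Lj _]/= !mulrA b.
  rewrite -[T i.+2 * T i.+1 * T i.+2 * Lj i]mulrA c.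
  move: b; rewrite -!mulrA => b.
  by rewrite b.
Qed.


Lemma F3 l k : (l < k)%N -> (k < d)%N -> comm (Lj k) (Lj l).
Proof.
elim: l k => [|l IH] k lk kd /=; first by apply/commr_sym/F0.
apply: commrM; first apply: commrM.
- by apply/commr_sym/F2; lia.
- by apply: IH; lia.
- by apply/commr_sym/F2; lia.
Qed.

Definition fL k := (q ^+ k)%:A + Lj k.

Lemma F4core (t L' L : A) (a : K) : L = t * L' * t -> L' * L = L * L' ->
  t * t = (q - 1) *: t + q%:A -> comm t ((a%:A + L') * ((a * q)%:A + L)).
Proof.
move=> eL cLL hq'.
have e1 : t * L = (q-1) *: L + q *: (L' * t).
  by rewrite eL !mulrA hq' !mulrDl mulr_algl -!scalerAl.
have e2 : L * t = (q-1) *: L + q *: (t * L').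
  by rewrite eL -!mulrA hq' !mulrDr mulr_algr -!scalerAr !mulrA.
have e3 : t * (L' * L) = (L' * L) * t.
  by rewrite {1}eL !mulrA -eL cLL.
have ex : (a%:A + L') * ((a * q)%:A + L) = (a * (a * q))%:A + a *: L + (a * q) *: L' + L' * L.
  rewrite mulrDl !mulrDr mulr_algl mulr_algr mulr_algl scalerA.
  by rewrite !addrA.
rewrite /comm ex !mulrDr !mulrDl -!scalerAr -!scalerAl e1 e2 e3.
rewrite !scalerDr !scalerA mulr1 mul1r -!addrA.
by congr (_ + (_ + _)); rewrite addrCA.
Qed.

Lemma F4 j : (j.+1 < d)%N -> comm (T j.+1) (fL j * fL j.+1).
Proof.
move=> jd; rewrite /fL exprSr; apply: F4core => //.
- by apply/commr_sym/F3; lia.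
- by apply: hq; lia.
Qed.

Definition uL j := \prod_(0 <= k < j) fL k.

Lemma u_eq j : uplus q T j = uL j.
Proof. by rewrite /uplus /uL; apply: eq_bigr => k _; rewrite Tarc_L. Qed.

Lemma uLS j : uL j.+1 = uL j * fL j.
Proof. by rewrite /uL big_nat_recr. Qed.

Lemma comm_fL x k : comm x (Lj k) -> comm x (fL k).
Proof. by move=> h; apply: commrD => //; apply/commr_sym/comm_alg. Qed.

Lemma comm_uL_all x j : (forall k, (k < j)%N -> comm x (Lj k)) -> comm x (uL j).
Proof.
move=> h; rewrite /uL big_seq; apply: commr_prod => k.
by rewrite mem_index_iota => /andP[_ kj]; apply/comm_fL/h.
Qed.

Lemma comm_u i j : (i < d)%N -> i != j -> (j <= d)%N -> comm (T i) (uL j).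
Proof.
case: i => [|i] id ij jd.
  by apply: comm_uL_all => k kj; apply: F0; lia.
case: (ltnP j i.+1) => ji.
  by apply: comm_uL_all => k kj; apply: F1; lia.
have {ij ji} : (i.+2 <= j)%N by rewrite ltn_neqAle ij ji.
elim: j jd => [|j IH] // jd ij.
rewrite uLS.
case: (ltngtP i.+1 j) => [lt|gt|eq].
- apply: commrM; first by apply: IH; lia.
  by apply/comm_fL/F2; lia.
- lia.
- subst j; rewrite uLS -mulrA; apply: commrM; last by apply: F4; lia.
  by apply: comm_uL_all => k kj; apply: F1; lia.
Qed.


Notation inH := (inH d T).
Notation okw := (all (fun k => (1 <= k < d)%N)).

Lemma inH_ind (P : A -> Prop) : P 0 -> (forall x y, P x -> P y -> P (x + y)) ->
  (forall c x, P x -> P (c *: x)) -> (forall w, okw w -> P (Tw T w)) ->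
  forall x, inH x -> P x.
Proof.
move=> h0 hD hZ hW x [s [hs ->]].
elim: s hs => [|p s IH] hs; first by rewrite big_nil.
rewrite big_cons; apply: hD.
  by apply/hZ/hW/hs; rewrite mem_head.
by apply: IH => p' h; apply: hs; rewrite in_cons h orbT.
Qed.

Lemma inH0 : inH 0.
Proof. by exists [::]; split => //; rewrite big_nil. Qed.

Lemma inHD x y : inH x -> inH y -> inH (x + y).
Proof.
move=> [s1 [h1 ->]] [s2 [h2 ->]]; exists (s1 ++ s2); split; last by rewrite big_cat.
by move=> p; rewrite mem_cat => /orP[]; [apply: h1|apply: h2].
Qed.

Lemma inHZ c x : inH x -> inH (c *: x).
Proof.
move=> [s [h ->]]; exists [seq (c * p.1, p.2) | p <- s]; split.
  by move=> p /mapP[p' p's ->]; exact: (h p' p's).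
rewrite big_map scaler_sumr; apply: eq_bigr => p _; by rewrite scalerA.
Qed.

Lemma inHW w : okw w -> inH (Tw T w).
Proof.
move=> h; exists [:: (1, w)]; split; last by rewrite big_seq1 scale1r.
by move=> p; rewrite mem_seq1 => /eqP ->.
Qed.

Lemma inH1 : inH 1.
Proof. by rewrite -Tw_nil; apply: inHW. Qed.

Lemma inHM x y : inH x -> inH y -> inH (x * y).
Proof.
move=> hx hy; move: x hx; apply: inH_ind.
- by rewrite mul0r; apply: inH0.
- by move=> x1 x2 h1 h2; rewrite mulrDl; apply: inHD.
- by move=> c x h; rewrite -scalerAl; apply: inHZ.
move=> w hw; move: y hy; apply: inH_ind.
- by rewrite mulr0; apply: inH0.
- by move=> x1 x2 h1 h2; rewrite mulrDr; apply: inHD.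
- by move=> c x h; rewrite -scalerAr; apply: inHZ.
by move=> w' hw'; rewrite -Tw_cat; apply: inHW; rewrite all_cat hw hw'.
Qed.

Notation inS := (inSumHuH d q T).
Notation u := (uplus q T).

Lemma inS_ind i (P : A -> Prop) : P 0 -> (forall x y, P x -> P y -> P (x + y)) ->
  (forall j a b, (i < j <= d)%N -> inH a -> inH b -> P (a * u j * b)) ->
  forall x, inS i x -> P x.
Proof.
move=> h0 hD hG x [s [hs ->]].
elim: s hs => [|p s IH] hs; first by rewrite big_nil.
rewrite big_cons; apply: hD.
  by case: (hs p (mem_head _ _)) => h1 h2 h3; exact: (hG _ _ _ h1 h2 h3).
by apply: IH => p' h; apply: hs; rewrite in_cons h orbT.
Qed.

Lemma inS0 i : inS i 0.
Proof. by exists [::]; split => //; rewrite big_nil. Qed.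

Lemma inSD i x y : inS i x -> inS i y -> inS i (x + y).
Proof.
move=> [s1 [h1 ->]] [s2 [h2 ->]]; exists (s1 ++ s2); split; last by rewrite big_cat.
by move=> p; rewrite mem_cat => /orP[]; [apply: h1|apply: h2].
Qed.

Lemma inSG i j a b : (i < j <= d)%N -> inH a -> inH b -> inS i (a * u j * b).
Proof.
move=> hj ha hb; exists [:: (j, a, b)]; split; last by rewrite big_seq1.
by move=> p; rewrite mem_seq1 => /eqP -> /=.
Qed.

Lemma inS_mono i i' x : (i' <= i)%N -> inS i x -> inS i' x.
Proof.
move=> le; move: x; apply: inS_ind; [exact: inS0| exact: inSD|].
move=> j a b hj ha hb; apply: inSG => //; lia.
Qed.

Lemma inS_mull i a x : inH a -> inS i x -> inS i (a * x).
Proof.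
move=> ha; move: x; apply: inS_ind.
- by rewrite mulr0; apply: inS0.
- by move=> x1 x2 h1 h2; rewrite mulrDr; apply: inSD.
- by move=> j a' b hj ha' hb; rewrite !mulrA; apply: inSG => //; apply: inHM.
Qed.

Lemma inS_mulr i a x : inH a -> inS i x -> inS i (x * a).
Proof.
move=> ha; move: x; apply: inS_ind.
- by rewrite mul0r; apply: inS0.
- by move=> x1 x2 h1 h2; rewrite mulrDl; apply: inSD.
- by move=> j a' b hj ha' hb; rewrite -mulrA; apply: inSG => //; apply: inHM.
Qed.

Lemma inSZ i c x : inS i x -> inS i (c *: x).
Proof.
move: x; apply: inS_ind.
- by rewrite scaler0; apply: inS0.
- by move=> x1 x2 h1 h2; rewrite scalerDr; apply: inSD.
- by move=> j a b hj ha hb; rewrite !scalerAl; apply: inSG => //; apply: inHZ.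
Qed.

Definition M i x := exists h r, inH h /\ inS i r /\ x = u i * h + r.

Lemma M0 i : M i 0.
Proof. by exists 0, 0; rewrite mulr0 addr0; split; [apply: inH0|split; [apply: inS0|]]. Qed.

Lemma MD i x y : M i x -> M i y -> M i (x + y).
Proof.
move=> [h1 [r1 [? [? ->]]]] [h2 [r2 [? [? ->]]]].
exists (h1 + h2), (r1 + r2); split; first by apply: inHD.
split; first by apply: inSD.
by rewrite mulrDr -!addrA; congr (_ + _); rewrite addrCA.
Qed.

Lemma MZ i c x : M i x -> M i (c *: x).
Proof.
move=> [h [r [? [? ->]]]]; exists (c *: h), (c *: r); split; first by apply: inHZ.
by split; [apply: inSZ| rewrite scalerDr scalerAr].
Qed.

Lemma Mmulr i x a : inH a -> M i x -> M i (x * a).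
Proof.
move=> ha [h [r [? [? ->]]]]; exists (h * a), (r * a); split; first by apply: inHM.
by split; [apply: inS_mulr| rewrite mulrDl mulrA].
Qed.

Lemma Mu i h : inH h -> M i (u i * h).
Proof. by move=> hh; exists h, 0; split => //; split; [apply: inS0| rewrite addr0]. Qed.

Lemma MS i r : inS i r -> M i r.
Proof. by move=> hr; exists 0, r; split; [apply: inH0| split => //; rewrite mulr0 add0r]. Qed.

Lemma Mmull i k x : (1 <= k < d)%N -> k != i -> (i <= d)%N -> M i x -> M i (T k * x).
Proof.
move=> hk ki id [h [r [? [? ->]]]]; exists (T k * h), (T k * r).
have hT : inH (T k) by rewrite -Tw1; apply: inHW; rewrite /= hk.
split; first by apply: inHM.
split; first by apply: inS_mull.
rewrite mulrDr mulrA u_eq (comm_u _ _ _) //; [by rewrite mulrA|lia].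
Qed.


Lemma uT0 i : (1 <= i <= d)%N -> uL i * T 0%N = uL i.
Proof.
move=> hi; have c : comm (T 0%N) (uL i) by apply: comm_u; lia.
rewrite -c /uL big_ltn; last lia.
rewrite mulrA; congr (_ * _).
by rewrite /fL /= expr0 mulrDr mulr_algr !scale1r h00 addrC.
Qed.

Definition dw a := rev (iota 1 a).

Lemma Tto_dw i : Tto T i 0 = Tw T (dw i) * T 0%N.
Proof.
rewrite /Tto /word_to leq0n subn0 /dw.
by rewrite [iota 0 _]/= rev_cons -cats1 Tw_cat Tw1.
Qed.

Lemma Tarc_Tto i : (1 <= i)%N -> Tarc T i 0 = Tto T i 0 * Tto T 1 i.
Proof.
move=> hi; rewrite /Tarc; case: i hi => [|i] // _.
by rewrite /= Tw_cat.
Qed.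

Lemma partb i y : (1 <= i)%N -> Tto T 1 i * y = 1 ->
  uL i * Tto T i 0 = uL i.+1 * y - q ^+ i *: (uL i * y).
Proof.
move=> hi hy; rewrite uLS /fL -Tarc_L Tarc_Tto // mulrDr mulr_algr !mulrDl.
by rewrite -scalerAl [_ + uL i * _ * y]addrC addrK -!mulrA hy mulr1.
Qed.


Lemma word1 k : word_to 1 k.+1 = iota 1 k.+1.
Proof. by case: k => [|j] //; rewrite /word_to /= subn1. Qed.

Section Inv.
Variable qi : K.
Hypothesis hqi : q * qi = 1.

Definition Tinv k := qi *: (T k - (q - 1)%:A).

Lemma TTinv k : (1 <= k < d)%N -> T k * Tinv k = 1.
Proof.
move=> hk; rewrite /Tinv -scalerAr mulrBr mulr_algr hq // addrAC subrr add0r scalerA mulrC hqi.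
by rewrite scale1r.
Qed.

Lemma inH_Tinv k : (1 <= k < d)%N -> inH (Tinv k).
Proof.
move=> hk; rewrite /Tinv; apply: inHZ; apply: inHD.
  by rewrite -Tw1; apply: inHW; rewrite /= hk.
by rewrite -scaleNr; apply: inHZ; apply: inH1.
Qed.

Definition Rinv w := \prod_(k <- rev w) Tinv k.

Lemma Rinv_ok w : okw w -> Tw T w * Rinv w = 1 /\ inH (Rinv w).
Proof.
elim: w => [|k w IH] /=; first by rewrite /Rinv Tw_nil big_nil mulr1; split => //; apply: inH1.
move=> /andP[hk hw]; have [e1 e2] := IH hw.
rewrite /Rinv rev_cons -cats1 big_cat big_seq1 -/(Rinv w) Tw_cons.
split; first by rewrite -mulrA (mulrA (Tw T w)) e1 mul1r TTinv.
by apply: inHM => //; apply: inH_Tinv.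
Qed.

Lemma y_inH i y : (1 <= i < d)%N -> y * Tto T 1 i = 1 -> inH y.
Proof.
case: i => [|i] // hi hy.
have ok : okw (iota 1 i.+1).
  apply/allP => l; rewrite mem_iota => /andP[h1 h2]; apply/andP; split => //; lia.
have [e1 e2] := Rinv_ok ok.
have -> : y = Rinv (iota 1 i.+1).
  by rewrite -[y]mulr1 -e1 mulrA -word1 hy mul1r.
exact: e2.
Qed.
End Inv.

Inductive spn (G : A -> Prop) : A -> Prop :=
| spn0 : spn G 0
| spnG x : G x -> spn G x
| spnD x y : spn G x -> spn G y -> spn G (x + y)
| spnZ c x : spn G x -> spn G (c *: x).

Definition okw2 := all (fun k => (2 <= k < d)%N).
Definition Qgen z := exists a w, (a < d)%N /\ okw2 w /\ z = Tw T (dw a) * Tw T w.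
Notation Q := (spn Qgen).

Lemma Q_mulw z w : okw2 w -> Q z -> Q (z * Tw T w).
Proof.
move=> hw; elim.
- by rewrite mul0r; apply: spn0.
- move=> x [a [w' [ha [hw' ->]]]]; apply: spnG; exists a, (w' ++ w).
  split => //; split. 
    by rewrite /okw2 all_cat; apply/andP; split.
  by rewrite Tw_cat mulrA.
- by move=> x y _ hx _ hy; rewrite mulrDl; apply: spnD.
- by move=> c x _ hx; rewrite -scalerAl; apply: spnZ.
Qed.

Lemma dwS a : dw a.+1 = a.+1 :: dw a.
Proof.
have iS : forall m n, iota m n.+1 = iota m n ++ [:: m + n]%N.
  by move=> m n; rewrite -addn1 iotaD.
by rewrite /dw iS rev_cat add1n.
Qed.

Lemma mem_dw l a : l \in dw a -> (1 <= l <= a)%N.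
Proof. rewrite /dw mem_rev mem_iota; lia. Qed.

Lemma ok_dw a : (a < d)%N -> okw (dw a).
Proof. by move=> ad; apply/allP => l /mem_dw h; apply/andP; split; lia. Qed.

Lemma QG a w : (a < d)%N -> okw2 w -> Q (Tw T (dw a) * Tw T w).
Proof. by move=> ha hw; apply: spnG; exists a, w. Qed.

Lemma QG0 a : (a < d)%N -> Q (Tw T (dw a)).
Proof. by move=> ha; rewrite -[Tw T (dw a)]mulr1 -Tw_nil; apply: QG. Qed.

Lemma Tk_dw_lt a k : (1 <= k)%N -> (k < a)%N -> (a < d)%N ->
  T k * Tw T (dw a) = Tw T (dw a) * T k.+1.
Proof.
move=> k1; elim: a => [|a IH] // ka ad.
case: (ltngtP k a) => [lt|gt|eq]; last first.
- subst a; case: k k1 IH ka ad => [|k] // _ _ _ ad.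
  have c : comm (T k.+2) (Tw T (dw k)).
    by apply: comm_Tw => l /mem_dw hl; apply: hfar; lia.
  have b : T k.+1 * T k.+2 * T k.+1 = T k.+2 * T k.+1 * T k.+2 by apply: hbr; lia.
  rewrite !dwS !Tw_cons !mulrA b -!mulrA c.
  by [].
- lia.
- rewrite dwS Tw_cons mulrA.
  have c : comm (T k) (T a.+1) by apply: hfar; lia.
  by rewrite c -mulrA IH 1?mulrA //; lia.
Qed.

Lemma Tk_dw k a : (1 <= k < d)%N -> (a < d)%N -> Q (T k * Tw T (dw a)).
Proof.
move=> hk ha.
case: (ltngtP k a) => [lt|gt|eq].
- rewrite Tk_dw_lt //; last lia.
  rewrite -Tw1; apply: QG => //; rewrite /okw2 /= andbT; apply/andP; split; lia.
- case: (ltngtP k a.+1) => [lt'|gt'|eq']; first lia.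
  + have c : comm (T k) (Tw T (dw a)).
      by apply: comm_Tw => l /mem_dw hl; apply: hfar; lia.
    rewrite c -Tw1; apply: QG => //; rewrite /okw2 /= andbT; apply/andP; split; lia.
  + by subst k; rewrite -Tw_cons -dwS; apply: QG0; lia.
- subst k; case: a hk ha => [|a] // hk ha.
  rewrite dwS Tw_cons mulrA hq // mulrDl mulr_algl -scalerAl.
  by rewrite -Tw_cons -dwS; apply: spnD; apply: spnZ; apply: QG0; lia.
Qed.

Lemma Q_mull k z : (1 <= k < d)%N -> Q z -> Q (T k * z).
Proof.
move=> hk; elim.
- by rewrite mulr0; apply: spn0.
- move=> x [a [w' [ha [hw' ->]]]]; rewrite mulrA; apply: Q_mulw => //.
  exact: Tk_dw.
- by move=> x y _ hx _ hy; rewrite mulrDr; apply: spnD.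
- by move=> c x _ hx; rewrite -scalerAr; apply: spnZ.
Qed.

Lemma Q_words w : okw w -> Q (Tw T w).
Proof.
elim: w => [|k w IH] /=; first by move=> _; rewrite -[Tw T [::]]/(Tw T (dw 0)); apply: QG0; lia.
by move=> /andP[hk hw]; rewrite Tw_cons; apply: Q_mull => //; apply: IH.
Qed.


Lemma keyLt i a : (1 <= i <= d)%N -> (a < i)%N -> M i (u i * Tw T (dw a) * T 0%N).
Proof.
move=> hi ai.
have c : comm (Tw T (dw a)) (uL i).
  apply/commr_sym; apply: comm_Tw => l /mem_dw hl; apply/commr_sym/comm_u; lia.
rewrite u_eq -c -mulrA uT0 // c -u_eq; apply: Mu; apply: inHW; apply: ok_dw; lia.
Qed.

Lemma keyEq i qi : q * qi = 1 -> (1 <= i < d)%N -> M i (u i * Tw T (dw i) * T 0%N).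
Proof.
move=> hqi hi.
have ok : okw (iota 1 i).
  apply/allP => l; rewrite mem_iota => /andP[h1 h2]; apply/andP; split => //; lia.
have [e1 e2] := Rinv_ok hqi ok.
set y := Rinv qi (iota 1 i) in e1 e2.
have ht : Tto T 1 i = Tw T (iota 1 i).
  by case: (i) hi => [|i'] // _; rewrite /Tto word1.
have hy : Tto T 1 i * y = 1 by rewrite ht.
rewrite -mulrA -Tto_dw u_eq (partb (y := y)) //; last lia.
exists (- q ^+ i *: y), (1 * u i.+1 * y); split; first by apply: inHZ.
split; first by apply: inSG => //; [lia|apply: inH1].
by rewrite mul1r -!u_eq scaleNr scalerAr mulrN addrC.
Qed.

Lemma keyM i qi a : q * qi = 1 -> (1 <= i <= d)%N -> (a < d)%N ->
  M i (u i * Tw T (dw a) * T 0%N).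
Proof.
move=> hqi hi; elim: a => [|a IH] ha.
  by apply: keyLt; lia.
case: (ltngtP a.+1 i) => [lt|gt|eq].
- by apply: keyLt; lia.
- rewrite dwS Tw_cons.
  have c : comm (T a.+1) (u i) by rewrite u_eq; apply: comm_u; lia.
  rewrite mulrA -c -!mulrA (mulrA (u i)); apply: Mmull; try lia.
  by apply: IH; lia.
- by rewrite -eq; apply: keyEq hqi _; lia.
Qed.

Lemma stepM i qi : q * qi = 1 -> (1 <= i <= d)%N ->
  (forall j, (i < j <= d)%N -> forall x, M j x -> M j (x * T 0%N)) ->
  forall x, M i x -> M i (x * T 0%N).
Proof.
move=> hqi hi IHj x [h [r [hh [hr ->]]]]; rewrite mulrDl; apply: MD.
- move: h hh; apply: inH_ind.
  + by rewrite mulr0 mul0r; apply: M0.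
  + by move=> x1 x2 h1 h2; rewrite mulrDr mulrDl; apply: MD.
  + by move=> c x' h; rewrite -scalerAr -scalerAl; apply: MZ.
  move=> w hw; elim: (Q_words hw).
  + by rewrite mulr0 mul0r; apply: M0.
  + move=> z [a [w' [ha [hw' ->]]]].
    have c : comm (T 0%N) (Tw T w').
      by apply: comm_Tw => l hl; apply: h0c; move/allP: hw' => /(_ l hl).
    rewrite mulrA -mulrA -c mulrA; apply: Mmulr; first last.
      exact: keyM hqi hi ha.
    apply: inHW; apply/allP => l hl; move/allP: hw' => /(_ l hl); lia.
  + by move=> x1 x2 _ h1 _ h2; rewrite mulrDr mulrDl; apply: MD.
  + by move=> c x' _ h; rewrite -scalerAr -scalerAl; apply: MZ.
- apply: MS; move: r hr; apply: inS_ind.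
  + by rewrite mul0r; apply: inS0.
  + by move=> x1 x2 h1 h2; rewrite mulrDl; apply: inSD.
  move=> j a b hj ha hb.
  have [h' [r' [hh' [hr' e]]]] := IHj j hj _ (Mu j hb).
  rewrite -!mulrA (mulrA (u j)) e mulrDr mulrA; apply: inSD.
    by apply: inSG.
  by apply: (inS_mono (i := j)); [lia| apply: inS_mull].
Qed.

Lemma mainM i qi : q * qi = 1 -> (1 <= i <= d)%N -> forall x, M i x -> M i (x * T 0%N).
Proof.
move=> hqi; move: {2}(d - i)%N (leqnn (d - i)) => n; elim: n i => [|n IH] i hn hi.
  by apply: (stepM hqi) => // j hj; lia.
apply: (stepM hqi) => // j hj; apply: IH; lia.
Qed.

End Hk.

Theorem lemma6p2 (K : comPzRingType) (A : algType K) (m : nat) (q : K)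
    (T : nat -> A) :
  (1 <= m)%N ->
  (exists qi : K, q * qi = 1) ->
  HeckeB_rel (2 * m) q T ->
  let d := (2 * m)%N in
  let u := uplus q T in
  (* (a) *)
  (forall j i, (j <= d)%N -> (i < d)%N -> i != j -> u j * T i = T i * u j) /\
  (* (b) *)
  (forall i (y : A), (1 <= i < d)%N ->
     y * Tto T 1 i = 1 -> Tto T 1 i * y = 1 ->
     u i * Tto T i 0 = u i.+1 * y - (q ^+ i) *: (u i * y)) /\
  (* (c) *)
  (forall (x : 'S_(2 * m)) (w : seq nat) i, (1 <= i <= d)%N ->
     reduced_expr x w ->
     exists h r, inH d T h /\ inSumHuH d q T i r /\
       u i * Tw T w * T 0%N = u i * h + r) /\
  (forall i (y : A), (1 <= i < d)%N ->
     y * Tto T 1 i = 1 -> Tto T 1 i * y = 1 ->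
     exists r, inSumHuH d q T i r /\
       u i * Tto T i 0 = u i * (- (q ^+ i) *: y) + r).
Proof.
move=> m1 [qi hqi] HR d u.
have d1 : (1 < d)%N by rewrite /d; lia.
split; [|split; [|split]].
- move=> j i jd id ij; rewrite /u u_eq.
  by symmetry; apply: (comm_u d1 HR).
- move=> i y hi hy1 hy2; rewrite /u !u_eq.
  by apply: partb => //; case/andP: hi.
- move=> x w i hi [hw _ _].
  apply: (mainM d1 HR hqi hi).
  by apply: Mu; apply: inHW.
- move=> i y hi hy1 hy2.
  exists (1 * u i.+1 * y); split.
    apply: inSG; [lia| exact: inH1| exact: (y_inH d1 HR hqi hi hy1)].
  rewrite /u !u_eq (@partb _ _ q T i y) //; last by case/andP: hi.
  by rewrite mul1r scaleNr scalerAr mulrN addrC.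
Qed.
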